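(* Let $\gamma$ be a locally $K$-Lipschitz-graphical Jordan curve with continuous periodic parametrisation $\gamma:\mathbb{R}\to\mathbb{C}$ and local $K$-Lipschitz-graphical constant $\mu_K$. Let $\varphi:\mathbb{R}\to\mathbb{R}_{\ge0}$ be smooth, supported in $[-1,1]$, with $\int_{\mathbb{R}}\varphi=1$, and $\gamma_\varepsilon(s)=\int_{\mathbb{R}}\frac1\varepsilon\varphi(u/\varepsilon)\gamma(s-u)\,du$. Then for sufficiently small $\varepsilon>0$, $\gamma_\varepsilon$ is a locally $K$-Lipschitz-graphical Jordan curve, and, letting $\mu_{K,\varepsilon}$ be the local $K$-Lipschitz-graphical constant of $\gamma_\varepsilon$, we have $\liminf_{\varepsilon\to0}\mu_{K,\varepsilon}\ge\mu_K$.
   Context: Locally monotone: a Jordan curve with periodic parametrisation $\gamma$ is locally monotone if for every $\theta$ there are an open interval $U_\theta=(\theta_1,\theta_2)\ni\theta$ and a unit vector $v_\theta$ with $g_{v_\theta}(s)=\gamma(s)\cdot v_\theta$ strictly monotone on $U_\theta$. Let $f_{v_\theta}(s)=\gamma(s)\cdot n_\theta$ with $n_\theta$ a unit vector perpendicular to $v_\theta$. $\gamma$ is locally $K$-Lipschitz-graphical if for every $\theta$ there is such a pair $(v_\theta,U_\theta)$ for which moreover $f_{v_\theta}\circ g_{v_\theta}^{-1}$ is $K$-Lipschitz on $g_{v_\theta}(U_\theta)$. For a pair put $\mu(\theta,v_\theta,U_\theta)=\min\{|g_{v_\theta}(\theta)-g_{v_\theta}(\theta_1)|,|g_{v_\theta}(\theta)-g_{v_\theta}(\theta_2)|\}$;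 let $\mu_K(\theta)$ be the maximal (supremal) value of this over all pairs satisfying the $K$-Lipschitz condition, and the local $K$-Lipschitz-graphical constant is $\mu_K=\min_\theta\mu_K(\theta)$ (infimum). *)

(* Defs.v *)
From Stdlib Require Import Reals ZArith.
From Coquelicot Require Import Coquelicot.
Open Scope R_scope.

(* The plane C is modelled as R*R. *)
Definition dot (p q : R * R) : R := fst p * fst q + snd p * snd q.
Definition unit_vector (v : R * R) : Prop := fst v ^ 2 + snd v ^ 2 = 1.
Definition perp (v : R * R) : R * R := (- snd v, fst v).

Definition jordan_curve (gamma : R -> R * R) : Prop :=
  continuity (fun s => fst (gamma s)) /\ continuity (fun s => snd (gamma s)) /\
  exists T : R, 0 < T /\ (forall s, gamma (s + T) = gamma s) /\
    (forall s t, gamma s = gamma t -> exists k : Z, t - s = IZR k * T).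

Definition g_v (gamma : R -> R * R) (v : R * R) (s : R) : R := dot (gamma s) v.
Definition f_v (gamma : R -> R * R) (v : R * R) (s : R) : R := dot (gamma s) (perp v).

Definition strictly_monotone_on (g : R -> R) (a b : R) : Prop :=
  (forall s t, a < s -> s < t -> t < b -> g s < g t) \/
  (forall s t, a < s -> s < t -> t < b -> g t < g s).

(* (v, (a,b)) is an admissible pair at theta for the K-Lipschitz-graphical
   condition: v unit, theta in (a,b), g_v strictly monotone on (a,b), and
   f_v o g_v^{-1} is K-Lipschitz on g_v((a,b)).  Since g_v is injective on
   (a,b), the latter literally unfolds to the pointwise inequality below
   (x = g_v s, y = g_v t). *)
Definition KLG_pair (gamma : R -> R * R) (K theta : R) (v : R * R) (a b : R)
  : Prop :=
  unit_vector v /\ a < theta < b /\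
  strictly_monotone_on (g_v gamma v) a b /\
  (forall s t, a < s < b -> a < t < b ->
     Rabs (f_v gamma v s - f_v gamma v t) <= K * Rabs (g_v gamma v s - g_v gamma v t)).

Definition locally_KLG (gamma : R -> R * R) (K : R) : Prop :=
  forall theta, exists v a b, KLG_pair gamma K theta v a b.

Definition mu_pair (gamma : R -> R * R) (theta : R) (v : R * R) (a b : R) : R :=
  Rmin (Rabs (g_v gamma v theta - g_v gamma v a))
       (Rabs (g_v gamma v theta - g_v gamma v b)).

Definition muK_at (gamma : R -> R * R) (K theta : R) : Rbar :=
  Lub_Rbar (fun m => exists v a b, KLG_pair gamma K theta v a b /\
                                   m = mu_pair gamma theta v a b).

Definition Rbar_inf_over (P : R -> Prop) (F : R -> Rbar) : Rbar :=
  Glb_Rbar (fun m => exists i, P i /\ Rbar_le (F i) (Finite m)).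
Definition Rbar_sup_over (P : R -> Prop) (F : R -> Rbar) : Rbar :=
  Lub_Rbar (fun m => exists i, P i /\ Rbar_le (Finite m) (F i)).

Definition muK (gamma : R -> R * R) (K : R) : Rbar :=
  Rbar_inf_over (fun _ => True) (muK_at gamma K).

Definition liminf_0plus (F : R -> Rbar) : Rbar :=
  Rbar_sup_over (fun delta => 0 < delta)
    (fun delta => Rbar_inf_over (fun eps => 0 < eps < delta) F).

Definition smooth (phi : R -> R) : Prop :=
  forall (n : nat) (x : R), ex_derive (Derive_n phi n) x.

Definition gamma_eps (phi : R -> R) (gamma : R -> R * R) (eps : R) (s : R)
  : R * R :=
  (RInt_gen (fun u => / eps * phi (u / eps) * fst (gamma (s - u)))
            (Rbar_locally m_infty) (Rbar_locally p_infty),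
   RInt_gen (fun u => / eps * phi (u / eps) * snd (gamma (s - u)))
            (Rbar_locally m_infty) (Rbar_locally p_infty)).

(* Main.v *)
Require Import Defs.
From Stdlib Require Import Reals ZArith Lra Lia Classical ClassicalEpsilon FunctionalExtensionality.
From Coquelicot Require Import Coquelicot.
Open Scope R_scope.

Ltac req := match goal with |- ?l = ?r => change (@eq R l r) end; ring.

Definition cont (h : R -> R) := forall x, continuous h x.

Lemma cont_std h : cont h <-> continuity h.
Proof.
  split; intros H x.
  - apply continuity_pt_filterlim; apply H.
  - apply continuity_pt_filterlim; apply H.
Qed.

Lemma cont_integrand phi h eps s : cont phi -> cont h ->
  cont (fun w => phi w * h (s - eps * w)).
Proof.
  intros Hp Hh. apply cont_std. apply cont_std in Hp. apply cont_std in Hh.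
  apply continuity_mult; auto.
  apply (continuity_comp (fun w => s - eps * w) h); auto.
  apply continuity_minus. apply continuity_const; intros ? ?; auto.
  apply continuity_scal. apply derivable_continuous, derivable_id.
Qed.

Lemma scalR (a b : R) : scal a b = a * b. Proof. reflexivity. Qed.
Lemma plusR (a b : R) : plus a b = a + b. Proof. reflexivity. Qed.

Definition conv (phi : R -> R) (eps : R) (h : R -> R) (s : R) : R :=
  RInt (fun w => phi w * h (s - eps * w)) (-1) 1.

Lemma ex_cont f a b : cont f -> ex_RInt f a b.
Proof. intros H. apply (ex_RInt_continuous (V:=R_CompleteNormedModule)). intros; apply H. Qed.

Lemma RInt_phi_le phi k1 k2 : cont phi -> (forall x, 0 <= phi x) -> cont k1 -> cont k2 ->
  (forall w, -1 <= w <= 1 -> k1 w <= k2 w) ->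
  RInt (fun w => phi w * k1 w) (-1) 1 <= RInt (fun w => phi w * k2 w) (-1) 1.
Proof.
  intros Hp Hp0 H1 H2 Hle.
  apply RInt_le; try lra.
  - apply ex_cont. intro x. apply cont_std. apply continuity_mult; apply cont_std; auto.
  - apply ex_cont. intro x. apply cont_std. apply continuity_mult; apply cont_std; auto.
  - intros x Hx. apply Rmult_le_compat_l; auto. apply Hle; lra.
Qed.

Lemma RInt_phi_const phi c : cont phi -> RInt phi (-1) 1 = 1 ->
  RInt (fun w => phi w * c) (-1) 1 = c.
Proof.
  intros Hp H1.
  transitivity (RInt (fun w => scal c (phi w)) (-1) 1).
  { apply RInt_ext; intros; rewrite Rmult_comm; reflexivity. }
  rewrite (RInt_scal (V:=R_CompleteNormedModule)). 2: apply ex_cont; auto.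
  rewrite H1. exact (Rmult_1_r c).
Qed.

Lemma RInt_phi_lin phi k1 k2 a b : cont phi -> cont k1 -> cont k2 ->
  RInt (fun w => phi w * (a * k1 w + b * k2 w)) (-1) 1 =
  a * RInt (fun w => phi w * k1 w) (-1) 1 + b * RInt (fun w => phi w * k2 w) (-1) 1.
Proof.
  intros Hp H1 H2.
  assert (E1 : ex_RInt (fun w => phi w * k1 w) (-1) 1).
  { apply ex_cont. intro x. apply cont_std. apply continuity_mult; apply cont_std; auto. }
  assert (E2 : ex_RInt (fun w => phi w * k2 w) (-1) 1).
  { apply ex_cont. intro x. apply cont_std. apply continuity_mult; apply cont_std; auto. }
  transitivity (RInt (fun w => plus (scal a (phi w * k1 w)) (scal b (phi w * k2 w))) (-1) 1).
  { apply RInt_ext; intros x _. change (phi x * (a * k1 x + b * k2 x) = a * (phi x * k1 x) + b * (phi x * k2 x)). ring. }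
  rewrite (RInt_plus (V:=R_CompleteNormedModule)).
  2: apply (ex_RInt_scal (V:=R_CompleteNormedModule)); exact E1.
  2: apply (ex_RInt_scal (V:=R_CompleteNormedModule)); exact E2.
  rewrite !(RInt_scal (V:=R_CompleteNormedModule)) by assumption.
  reflexivity.
Qed.

Lemma RInt_gen_compact (f : R -> R) A B : A <= B ->
  (forall x, x < A -> f x = 0) -> (forall x, B < x -> f x = 0) -> ex_RInt f A B ->
  is_RInt_gen f (Rbar_locally m_infty) (Rbar_locally p_infty) (RInt f A B).
Proof.
  intros HAB H1 H2 Hex P HP.
  apply Filter_prod with (fun a => a < A) (fun b => B < b).
  - exists A; auto.
  - exists B; auto.
  - intros a b Ha Hb. exists (RInt f A B). split.
    2: apply locally_singleton; auto.
    simpl.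
    assert (Z1 : is_RInt (V:=R_NormedModule) f a A zero).
    { apply is_RInt_ext with (fun _ => zero).
      - intros x Hx. rewrite Rmin_left in Hx by lra. rewrite Rmax_right in Hx by lra.
        rewrite H1 by lra. reflexivity.
      - pose proof (is_RInt_const (V:=R_NormedModule) a A zero) as Hc.
        replace (scal _ _) with (zero (G:=R_AbelianGroup)) in Hc. exact Hc. symmetry. apply (scal_zero_r (K:=R_Ring) (V:=R_ModuleSpace)). }
    assert (Z2 : is_RInt (V:=R_NormedModule) f B b zero).
    { apply is_RInt_ext with (fun _ => zero).
      - intros x Hx. rewrite Rmin_left in Hx by lra. rewrite Rmax_right in Hx by lra.
        rewrite H2 by lra. reflexivity.
      - pose proof (is_RInt_const (V:=R_NormedModule) B b zero) as Hc.
        replace (scal _ _) with (zero (G:=R_AbelianGroup)) in Hc. exact Hc. symmetry. apply (scal_zero_r (K:=R_Ring) (V:=R_ModuleSpace)). }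
    assert (Hm := is_RInt_Chasles f a A b _ _ Z1 (is_RInt_Chasles f A B b _ _ (RInt_correct (V:=R_CompleteNormedModule) _ _ _ Hex) Z2)).
    change (is_RInt f a b (0 + (RInt f A B + 0))) in Hm.
    rewrite Rplus_0_l, Rplus_0_r in Hm. exact Hm.
Qed.

Lemma gen_unique (f : R -> R) l :
  is_RInt_gen f (Rbar_locally m_infty) (Rbar_locally p_infty) l ->
  RInt_gen f (Rbar_locally m_infty) (Rbar_locally p_infty) = l.
Proof.
  intros H.
  apply (is_RInt_gen_unique (V:=R_CompleteNormedModule)).
  exact H.
Qed.

Lemma phi_int1 phi : cont phi -> (forall x, 1 < Rabs x -> phi x = 0) ->
  is_RInt_gen phi (Rbar_locally m_infty) (Rbar_locally p_infty) 1 ->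
  RInt phi (-1) 1 = 1.
Proof.
  intros Hc Hs H.
  assert (H' := RInt_gen_compact phi (-1) 1 ltac:(lra)).
  assert (E : is_RInt_gen phi (Rbar_locally m_infty) (Rbar_locally p_infty) (RInt phi (-1) 1)).
  { apply H'.
    - intros x Hx; apply Hs. rewrite Rabs_left; lra.
    - intros x Hx; apply Hs. rewrite Rabs_right; lra.
    - apply ex_cont; auto. }
  apply gen_unique in E. apply gen_unique in H. congruence.
Qed.

Lemma gen_conv phi h eps s : cont phi -> cont h -> 0 < eps ->
  (forall x, 1 < Rabs x -> phi x = 0) ->
  RInt_gen (fun u => / eps * phi (u / eps) * h (s - u))
     (Rbar_locally m_infty) (Rbar_locally p_infty) = conv phi eps h s.
Proof.
  intros Hp Hh He Hs.
  set (F := fun u => / eps * phi (u / eps) * h (s - u)).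
  assert (CF : cont F).
  { unfold F. apply cont_std. apply cont_std in Hp. apply cont_std in Hh.
    apply continuity_mult.
    - apply continuity_mult. apply continuity_const; intros ? ?; auto.
      apply (continuity_comp (fun u => u / eps) phi); auto.
      apply continuity_scal with (a := / eps) (f := fun u => u) ||
      (unfold Rdiv; apply continuity_mult; [apply derivable_continuous, derivable_id | apply continuity_const; intros ? ?; auto]).
    - apply (continuity_comp (fun u => s - u) h); auto.
      apply continuity_minus. apply continuity_const; intros ? ?; auto.
      apply derivable_continuous, derivable_id. }
  apply gen_unique.
  assert (E : RInt F (-eps) eps = conv phi eps h s).
  { unfold conv.
    replace (-eps) with (eps * (-1) + 0) by ring.
    replace eps with (eps * 1 + 0) at 2 by ring.
    rewrite <- (RInt_comp_lin (V:=R_CompleteNormedModule)).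
    2: apply ex_cont; auto.
    apply RInt_ext. intros x _. unfold F.
    change (eps * (/ eps * phi ((eps * x + 0) / eps) * h (s - (eps * x + 0))) = phi x * h (s - eps * x)).
    replace ((eps * x + 0) / eps) with x by (field; lra).
    replace (s - (eps * x + 0)) with (s - eps * x) by ring.
    field; lra. }
  rewrite <- E.
  apply RInt_gen_compact; try lra.
  - intros x Hx. unfold F. rewrite Hs. ring.
    rewrite Rabs_left. 2: apply Rmult_lt_reg_r with eps; auto; unfold Rdiv; rewrite Rmult_assoc, Rinv_l; lra.
    apply Rmult_lt_reg_r with eps; auto. unfold Rdiv. rewrite Ropp_mult_distr_l_reverse, Rmult_assoc, Rinv_l; lra.
  - intros x Hx. unfold F. rewrite Hs. ring.
    rewrite Rabs_right. 2: apply Rle_ge; unfold Rdiv; apply Rmult_le_pos; [lra| left; apply Rinv_0_lt_compat; lra].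
    apply Rmult_lt_reg_r with eps; auto. unfold Rdiv. rewrite Rmult_assoc, Rinv_l; lra.
  - apply ex_cont; auto.
Qed.

Lemma cont_pt_of f x : (forall e, 0 < e -> exists d, 0 < d /\
  forall y, Rabs (y - x) < d -> Rabs (f y - f x) < e) -> continuity_pt f x.
Proof.
  intros H e He. destruct (H e He) as [d [Hd Hy]]. exists d; split; auto.
  intros y [_ Hyx]. simpl in *. unfold R_dist in *. apply Hy; exact Hyx.
Qed.

Lemma cont_pt_to f x : continuity_pt f x -> forall e, 0 < e -> exists d, 0 < d /\
  forall y, Rabs (y - x) < d -> Rabs (f y - f x) < e.
Proof.
  intros H e He. destruct (H e He) as [d [Hd Hy]]. exists d; split; auto.
  intros y Hyx. destruct (Req_dec y x) as [->|Hn].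
  - unfold Rminus; rewrite Rplus_opp_r, Rabs_R0; lra.
  - apply (Hy y). split; auto. split; auto. exact I.
Qed.

Lemma cont_shift h s eps : cont h -> cont (fun w => h (s - eps * w)).
Proof.
  intros Hh. apply cont_std. apply cont_std in Hh.
  apply (continuity_comp (fun w => s - eps * w) h); auto.
  apply continuity_minus. apply continuity_const; intros ? ?; auto.
  apply continuity_scal. apply derivable_continuous, derivable_id.
Qed.

Lemma cont_lin h1 h2 a b : cont h1 -> cont h2 -> cont (fun t => a * h1 t + b * h2 t).
Proof.
  intros H1 H2. apply cont_std. apply cont_std in H1. apply cont_std in H2.
  apply continuity_plus; apply continuity_scal; auto.
Qed.

Lemma cont_const c : cont (fun _ => c).
Proof. apply cont_std. apply continuity_const; intros ? ?; auto. Qed.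

Lemma conv_le phi eps h1 h2 s t : cont phi -> (forall x, 0 <= phi x) -> cont h1 -> cont h2 ->
  (forall w, -1 <= w <= 1 -> h1 (s - eps * w) <= h2 (t - eps * w)) ->
  conv phi eps h1 s <= conv phi eps h2 t.
Proof.
  intros. unfold conv. apply RInt_phi_le; auto; apply cont_shift; auto.
Qed.

Lemma conv_lin phi eps h1 h2 a b s : cont phi -> cont h1 -> cont h2 ->
  conv phi eps (fun t => a * h1 t + b * h2 t) s = a * conv phi eps h1 s + b * conv phi eps h2 s.
Proof.
  intros. unfold conv.
  apply (RInt_phi_lin phi (fun w => h1 (s - eps * w)) (fun w => h2 (s - eps * w))); auto;
  apply cont_shift; auto.
Qed.

Lemma conv_close phi eps h s c e : cont phi -> (forall x, 0 <= phi x) -> RInt phi (-1) 1 = 1 ->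
  cont h -> (forall w, -1 <= w <= 1 -> Rabs (h (s - eps * w) - c) <= e) ->
  Rabs (conv phi eps h s - c) <= e.
Proof.
  intros Hp Hp0 H1 Hh Hw. unfold conv.
  assert (L : RInt (fun w => phi w * (c - e)) (-1) 1 <= RInt (fun w => phi w * h (s - eps * w)) (-1) 1).
  { apply RInt_phi_le; auto. apply cont_const. apply cont_shift; auto.
    intros w Hw'. specialize (Hw w Hw'). apply Rabs_le_between in Hw. lra. }
  assert (U : RInt (fun w => phi w * h (s - eps * w)) (-1) 1 <= RInt (fun w => phi w * (c + e)) (-1) 1).
  { apply RInt_phi_le; auto. apply cont_shift; auto. apply cont_const.
    intros w Hw'. specialize (Hw w Hw'). apply Rabs_le_between in Hw. lra. }
  rewrite RInt_phi_const in L, U; auto.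
  apply Rabs_le_between. lra.
Qed.

Lemma conv_strict phi eps h s t : cont phi -> (forall x, 0 <= phi x) -> RInt phi (-1) 1 = 1 ->
  cont h -> (forall w, -1 <= w <= 1 -> h (s - eps * w) < h (t - eps * w)) ->
  conv phi eps h s < conv phi eps h t.
Proof.
  intros Hp Hp0 H1 Hh Hw.
  set (k := fun w => 1 * h (t - eps * w) + (-1) * h (s - eps * w)).
  assert (Ck : cont k). { apply cont_lin; apply cont_shift; auto. }
  destruct (continuity_ab_min k (-1) 1 ltac:(lra)) as [w0 [Hm Hw0]].
  { intros; apply cont_std; auto. }
  assert (Pk : 0 < k w0). { unfold k. specialize (Hw w0 Hw0). lra. }
  assert (E : RInt (fun w => phi w * k w) (-1) 1 = conv phi eps h t - conv phi eps h s).
  { unfold k. rewrite RInt_phi_lin; try apply cont_shift; auto. unfold conv. req. }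
  assert (L : RInt (fun w => phi w * k w0) (-1) 1 <= RInt (fun w => phi w * k w) (-1) 1).
  { apply RInt_phi_le; auto. apply cont_const. }
  rewrite RInt_phi_const in L; auto. lra.
Qed.

Lemma per_Z {A : Type} (h : R -> A) T : (forall s, h (s + T) = h s) ->
  forall k s, h (s + IZR k * T) = h s.
Proof.
  intros Hp.
  assert (N : forall n s, h (s + INR n * T) = h s).
  { induction n; intros s.
    - simpl. f_equal. ring.
    - rewrite S_INR. replace (s + (INR n + 1) * T) with ((s + INR n * T) + T) by ring.
      rewrite Hp. apply IHn. }
  intros k s. destruct (Z_le_gt_dec 0 k) as [Hk|Hk].
  - rewrite <- (Z2Nat.id k) by lia. rewrite <- INR_IZR_INZ. apply N.
  - replace k with (- Z.of_nat (Z.to_nat (- k)))%Z by lia.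
    rewrite opp_IZR, <- INR_IZR_INZ.
    rewrite <- (N (Z.to_nat (-k)) (s + - INR (Z.to_nat (- k)) * T)).
    f_equal. ring.
Qed.

Lemma reduce T s : 0 < T -> exists k, 0 <= s - IZR k * T < T.
Proof.
  intros HT. destruct (floor_ex (s / T)) as [n Hn]. exists n.
  assert (IZR n * T <= s / T * T < (IZR n + 1) * T).
  { split; [apply Rmult_le_compat_r|apply Rmult_lt_compat_r]; lra. }
  replace (s / T * T) with s in H by (field; lra). lra.
Qed.

Lemma UC_per h T : 0 < T -> continuity h -> (forall s, h (s + T) = h s) ->
  forall e, 0 < e -> exists d, 0 < d /\ forall s t, Rabs (s - t) < d -> Rabs (h s - h t) < e.
Proof.
  intros HT Hc Hp e He.
  destruct (Heine h (fun c => -1 <= c <= T + 1) (compact_P3 _ _) (fun x _ => Hc x) (mkposreal e He))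
    as [d0 Hd0].
  exists (Rmin d0 1). split. { apply Rmin_pos; [apply cond_pos|lra]. }
  intros s t Hst.
  destruct (reduce T s HT) as [k Hk].
  assert (E1 : h s = h (s - IZR k * T)) by (rewrite <- (per_Z h T Hp k (s - IZR k * T)); f_equal; ring).
  assert (E2 : h t = h (t - IZR k * T)) by (rewrite <- (per_Z h T Hp k (t - IZR k * T)); f_equal; ring).
  rewrite E1, E2.
  assert (Hm1 := Rmin_l d0 1). assert (Hm2 := Rmin_r d0 1).
  apply Rabs_lt_between in Hst.
  apply (Hd0 (s - IZR k * T) (t - IZR k * T)); simpl; try lra.
  apply Rabs_lt_between. lra.
Qed.

Lemma lub_approx E r r' : is_lub E r -> r' < r -> exists m, E m /\ r' < m.
Proof.
  intros [Hu Hl] Hr. apply NNPP. intros Hn.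
  assert (is_upper_bound E r').
  { intros m Hm. apply Rnot_lt_le. intros Hc. apply Hn. exists m; auto. }
  specialize (Hl r' H). lra.
Qed.

Lemma KLG_move gamma K th th' v a b : KLG_pair gamma K th v a b -> a < th' < b ->
  KLG_pair gamma K th' v a b.
Proof. intros [H1 [H2 [H3 H4]]] H. repeat split; auto; lra. Qed.

Lemma KLG_per gamma K T th v a b k : (forall s, gamma (s + T) = gamma s) ->
  KLG_pair gamma K th v a b ->
  KLG_pair gamma K (th + IZR k * T) v (a + IZR k * T) (b + IZR k * T).
Proof.
  intros Hp [H1 [H2 [H3 H4]]].
  assert (G : forall s, gamma s = gamma (s - IZR k * T)).
  { intros s. rewrite <- (per_Z gamma T Hp k (s - IZR k * T)). f_equal; ring. }
  assert (Eg : forall s, g_v gamma v s = g_v gamma v (s - IZR k * T)).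
  { intros s; unfold g_v; rewrite G; auto. }
  assert (Ef : forall s, f_v gamma v s = f_v gamma v (s - IZR k * T)).
  { intros s; unfold f_v; rewrite G; auto. }
  split; auto. split; [lra|]. split.
  - destruct H3 as [H3|H3]; [left|right]; intros s t Hs Hst Ht; rewrite !(Eg s), !(Eg t);
      apply H3; lra.
  - intros s t Hs Ht. rewrite (Eg s), (Eg t), (Ef s), (Ef t). apply H4; lra.
Qed.

Definition Emarg gamma K th m := m <= 1 /\ exists v a b,
  KLG_pair gamma K th v a b /\ a + m <= th /\ th + m <= b.

Lemma margin gamma K T : 0 < T -> (forall s, gamma (s + T) = gamma s) ->
  locally_KLG gamma K -> exists L, 0 < L /\ forall th, exists v a b,
  KLG_pair gamma K th v a b /\ a + L <= th /\ th + L <= b.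
Proof.
  intros HT Hp HK.
  assert (Pos : forall th, exists m, 0 < m /\ Emarg gamma K th m).
  { intros th. destruct (HK th) as [v [a [b Hk]]].
    assert (Hab := proj1 (proj2 Hk)).
    exists (Rmin 1 (Rmin (th - a) (b - th))). split.
    - apply Rmin_pos; [lra| apply Rmin_pos; lra].
    - split; [apply Rmin_l|]. exists v, a, b. split; auto.
      assert (Q1 := Rmin_r 1 (Rmin (th - a) (b - th))).
      assert (Q2 := Rmin_l (th - a) (b - th)). assert (Q3 := Rmin_r (th - a) (b - th)).
      split; lra. }
  assert (Hl : forall th, {r | is_lub (Emarg gamma K th) r}).
  { intros th. apply completeness.
    - exists 1. intros m [Hm _]; auto.
    - destruct (Pos th) as [m [_ Hm]]. exists m; auto. }
  set (rho := fun th => proj1_sig (Hl th)).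
  assert (Rl : forall th, is_lub (Emarg gamma K th) (rho th)).
  { intros th. unfold rho. destruct (Hl th); auto. }
  assert (Rp : forall th, 0 < rho th).
  { intros th. destruct (Pos th) as [m [Hm HE]]. destruct (Rl th) as [Hu _].
    specialize (Hu m HE). lra. }
  assert (Lip : forall th th', rho th - Rabs (th - th') <= rho th').
  { intros th th'. apply Rnot_lt_le. intros Hc.
    destruct (lub_approx _ _ (rho th' + Rabs (th - th')) (Rl th)) as [m [[Hm1 Hm] Hm2]]; [lra|].
    destruct Hm as [v [a [b [Hk [Ha Hb]]]]].
    assert (Hpos := Rp th').
    assert (E' : Emarg gamma K th' (m - Rabs (th - th'))).
    { assert (Ha' := Rabs_pos (th - th')).
      split; [lra|]. exists v, a, b.
      assert (th - th' <= Rabs (th - th')) by apply RRle_abs.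
      assert (-(th - th') <= Rabs (th - th')) by (rewrite <- Rabs_Ropp; apply RRle_abs).
      split; [apply KLG_move with th; auto; lra|]. split; lra. }
    destruct (Rl th') as [Hu _]. specialize (Hu _ E'). lra. }
  assert (Cr : forall th, continuity_pt rho th).
  { intros th. apply cont_pt_of. intros e He. exists e. split; auto.
    intros y Hy. apply Rabs_lt_between. split.
    - assert (Hq := Lip th y). rewrite Rabs_minus_sym in Hq. lra.
    - assert (Hq := Lip y th). lra. }
  destruct (continuity_ab_min rho 0 T ltac:(lra) (fun c _ => Cr c)) as [t0 [Hmin Ht0]].
  exists (rho t0 / 2). split. { assert (Hq := Rp t0). lra. }
  intros th. destruct (reduce T th HT) as [k Hk].
  assert (Hr := Hmin (th - IZR k * T) ltac:(lra)).
  destruct (lub_approx _ _ (rho t0 / 2) (Rl (th - IZR k * T))) as [m [[_ Hm] Hm2]].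
  { assert (Hq := Rp t0). lra. }
  destruct Hm as [v [a [b [Hk' [Ha Hb]]]]].
  exists v, (a + IZR k * T), (b + IZR k * T).
  split.
  - replace th with (th - IZR k * T + IZR k * T) at 1 by ring. apply KLG_per; auto.
  - split; lra.
Qed.

Lemma conv_diff_le phi eps h1 h2 c s t : cont phi -> (forall x, 0 <= phi x) -> cont h1 -> cont h2 ->
  (forall w, -1 <= w <= 1 -> h1 (s - eps * w) - h1 (t - eps * w) <= c * (h2 (s - eps * w) - h2 (t - eps * w))) ->
  conv phi eps h1 s - conv phi eps h1 t <= c * (conv phi eps h2 s - conv phi eps h2 t).
Proof.
  intros Hp Hp0 H1 H2 Hw.
  assert (L : RInt (fun w => phi w * (1 * h1 (s - eps * w) + (-1) * h1 (t - eps * w))) (-1) 1 <=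
              RInt (fun w => phi w * (c * h2 (s - eps * w) + (- c) * h2 (t - eps * w))) (-1) 1).
  { apply RInt_phi_le; auto.
    - apply cont_lin; apply cont_shift; auto.
    - apply cont_lin; apply cont_shift; auto.
    - intros w Hw'. specialize (Hw w Hw'). lra. }
  rewrite !RInt_phi_lin in L; try apply cont_shift; auto.
  unfold conv. lra.
Qed.

Lemma ew_bound eps w : 0 < eps -> -1 <= w <= 1 -> - eps <= eps * w <= eps.
Proof. intros He Hw. split; nra. Qed.

Lemma KLG_eps (gamma : R -> R * R) K phi eps th v a b :
  cont phi -> (forall x, 0 <= phi x) -> RInt phi (-1) 1 = 1 -> 0 < eps ->
  (forall s, g_v (gamma_eps phi gamma eps) v s = conv phi eps (g_v gamma v) s) ->
  (forall s, f_v (gamma_eps phi gamma eps) v s = conv phi eps (f_v gamma v) s) ->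
  cont (g_v gamma v) -> cont (f_v gamma v) ->
  KLG_pair gamma K th v a b -> a + eps < th < b - eps ->
  KLG_pair (gamma_eps phi gamma eps) K th v (a + eps) (b - eps).
Proof.
  intros Hp Hp0 H1 He Eg Ef Cg Cf [Hu [Hab [Hm Hl]]] Hth.
  split; auto. split; auto.
  set (g := g_v gamma v). set (f := f_v gamma v).
  split.
  - destruct Hm as [Hm|Hm]; [left|right]; intros s t Hs Hst Ht; rewrite !Eg;
      apply conv_strict; auto; intros w Hw; assert (Q := ew_bound eps w He Hw);
      apply Hm; lra.
  - intros s t Hs Ht. rewrite !Eg, !Ef.
    assert (Hsig : exists sg, (sg = 1 \/ sg = -1) /\ forall w, -1 <= w <= 1 ->
              0 <= sg * (g (s - eps * w) - g (t - eps * w))).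
    { destruct (Rtotal_order s t) as [Hst|[Hst|Hst]].
      - destruct Hm as [Hm|Hm].
        + exists (-1). split; auto. intros w Hw. assert (Q := ew_bound eps w He Hw).
          assert (g (s - eps * w) < g (t - eps * w)) by (apply Hm; lra). lra.
        + exists 1. split; auto. intros w Hw. assert (Q := ew_bound eps w He Hw).
          assert (g (t - eps * w) < g (s - eps * w)) by (apply Hm; lra). lra.
      - subst. exists 1. split; auto. intros. lra.
      - destruct Hm as [Hm|Hm].
        + exists 1. split; auto. intros w Hw. assert (Q := ew_bound eps w He Hw).
          assert (g (t - eps * w) < g (s - eps * w)) by (apply Hm; lra). lra.
        + exists (-1). split; auto. intros w Hw. assert (Q := ew_bound eps w He Hw).
          assert (g (s - eps * w) < g (t - eps * w)) by (apply Hm; lra). lra. }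
    destruct Hsig as [sg [Hsg Hw]].
    assert (Pw : forall w, -1 <= w <= 1 ->
      Rabs (f (s - eps * w) - f (t - eps * w)) <= K * (sg * (g (s - eps * w) - g (t - eps * w)))).
    { intros w Hw'. assert (Q := ew_bound eps w He Hw').
      replace (sg * (g (s - eps * w) - g (t - eps * w))) with (Rabs (g (s - eps * w) - g (t - eps * w))).
      - apply Hl; lra.
      - specialize (Hw w Hw'). destruct Hsg; subst sg.
        + rewrite Rabs_right; lra.
        + rewrite Rabs_left1; lra. }
    assert (A1 : conv phi eps f s - conv phi eps f t <= (K * sg) * (conv phi eps g s - conv phi eps g t)).
    { apply conv_diff_le; auto. intros w Hw'. specialize (Pw w Hw').
      apply Rabs_le_between in Pw. rewrite Rmult_assoc. lra. }
    assert (A2 : conv phi eps f t - conv phi eps f s <= (- (K * sg)) * (conv phi eps g t - conv phi eps g s)).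
    { apply conv_diff_le; auto. intros w Hw'. specialize (Pw w Hw').
      apply Rabs_le_between in Pw.
      replace (- (K * sg) * (g (t - eps * w) - g (s - eps * w))) with (K * (sg * (g (s - eps * w) - g (t - eps * w)))) by ring.
      lra. }
    replace (- (K * sg) * (conv phi eps g t - conv phi eps g s)) with (K * (sg * (conv phi eps g s - conv phi eps g t))) in A2 by ring.
    rewrite Rmult_assoc in A1.
    assert (B : 0 <= sg * (conv phi eps g s - conv phi eps g t)).
    { destruct Hsg; subst sg.
      - assert (conv phi eps g t <= conv phi eps g s); [|lra].
        apply conv_le; auto. intros w Hw'. specialize (Hw w Hw'). lra.
      - assert (conv phi eps g s <= conv phi eps g t); [|lra].
        apply conv_le; auto. intros w Hw'. specialize (Hw w Hw'). lra. }
    change (conv phi eps (g_v gamma v)) with (conv phi eps g). change (conv phi eps (f_v gamma v)) with (conv phi eps f).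
    replace (Rabs (conv phi eps g s - conv phi eps g t)) with (sg * (conv phi eps g s - conv phi eps g t)).
    + apply Rabs_le_between. lra.
    + destruct Hsg; subst sg.
      * rewrite Rabs_right; lra.
      * rewrite Rabs_left1; lra.
Qed.

Lemma conv_ext phi eps h1 h2 s : (forall t, h1 t = h2 t) -> conv phi eps h1 s = conv phi eps h2 s.
Proof. intros H. unfold conv. apply RInt_ext. intros w _. rewrite H. reflexivity. Qed.

Lemma ge_dot (gamma : R -> R * R) phi eps s u :
  cont phi -> cont (fun t => fst (gamma t)) -> cont (fun t => snd (gamma t)) -> 0 < eps ->
  (forall x, 1 < Rabs x -> phi x = 0) ->
  dot (gamma_eps phi gamma eps s) u = conv phi eps (fun t => dot (gamma t) u) s.
Proof.
  intros Hp Hx Hy He Hs. unfold dot at 1, gamma_eps. simpl.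
  rewrite (gen_conv phi (fun t => fst (gamma t))), (gen_conv phi (fun t => snd (gamma t))); auto.
  rewrite (conv_ext phi eps (fun t => dot (gamma t) u) (fun t => fst u * fst (gamma t) + snd u * snd (gamma t))).
  - rewrite conv_lin; auto. ring.
  - intros t. unfold dot. ring.
Qed.

Lemma cont_dot (gamma : R -> R * R) u :
  cont (fun t => fst (gamma t)) -> cont (fun t => snd (gamma t)) -> cont (fun t => dot (gamma t) u).
Proof.
  intros Hx Hy. assert (H := cont_lin _ _ (fst u) (snd u) Hx Hy).
  intros x. apply (continuous_ext (fun t => fst u * fst (gamma t) + snd u * snd (gamma t))).
  - intros t. unfold dot. req.
  - apply H.
Qed.

Lemma rect_min (F : R -> R -> R) a b c d : a <= b ->
  (forall s t, a <= s <= b -> c <= t <= d -> 0 < F s t) ->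
  (forall e, 0 < e -> exists dl, 0 < dl /\ forall s s' t t', Rabs (s - s') < dl -> Rabs (t - t') < dl ->
     Rabs (F s t - F s' t') < e) ->
  exists m, 0 < m /\ forall s t, a <= s <= b -> c <= t <= d -> m <= F s t.
Proof.
  intros Hab Hpos Hmod.
  destruct (Rle_dec c d) as [Hcd|Hcd].
  2:{ exists 1. split; [lra|]. intros; lra. }
  assert (Cont : forall s t, continuity_pt (F s) t).
  { intros s t. apply cont_pt_of. intros e He. destruct (Hmod e He) as [dl [Hdl H]].
    exists dl. split; auto. intros y Hy. apply H; auto. unfold Rminus; rewrite Rplus_opp_r, Rabs_R0; lra. }
  assert (Hch : forall s, {t | c <= t <= d /\ forall t', c <= t' <= d -> F s t <= F s t'}).
  { intros s. apply constructive_indefinite_description.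
    destruct (continuity_ab_min (F s) c d Hcd (fun t _ => Cont s t)) as [t [H1 H2]].
    exists t. split; auto. }
  set (mf := fun s => F s (proj1_sig (Hch s))).
  assert (Pm : forall s, c <= proj1_sig (Hch s) <= d /\ forall t', c <= t' <= d -> mf s <= F s t').
  { intros s. unfold mf. destruct (Hch s); simpl; auto. }
  assert (Cm : forall s, continuity_pt mf s).
  { intros s. apply cont_pt_of. intros e He. destruct (Hmod e He) as [dl [Hdl H]].
    exists dl. split; auto. intros y Hy.
    destruct (Pm s) as [Ps Qs]. destruct (Pm y) as [Py Qy].
    assert (Z : Rabs (proj1_sig (Hch s) - proj1_sig (Hch s)) < dl) by (unfold Rminus; rewrite Rplus_opp_r, Rabs_R0; lra).
    assert (Z' : Rabs (proj1_sig (Hch y) - proj1_sig (Hch y)) < dl) by (unfold Rminus; rewrite Rplus_opp_r, Rabs_R0; lra).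
    assert (A1 := H y s _ _ Hy Z).
    rewrite Rabs_minus_sym in Hy.
    assert (A2 := H s y _ _ Hy Z').
    assert (B1 := Qy _ Ps). assert (B2 := Qs _ Py).
    apply Rabs_lt_between in A1. apply Rabs_lt_between in A2.
    apply Rabs_lt_between. unfold mf in *. lra. }
  destruct (continuity_ab_min mf a b Hab (fun s _ => Cm s)) as [s0 [H1 H2]].
  exists (mf s0). split.
  - unfold mf. apply Hpos; auto. apply (proj1 (Pm s0)).
  - intros s t Hs Ht. apply Rle_trans with (mf s); auto. apply (proj2 (Pm s)); auto.
Qed.

Lemma abs4 A B A' B' : Rabs ((Rabs A + Rabs B) - (Rabs A' + Rabs B')) <= Rabs (A - A') + Rabs (B - B').
Proof. unfold Rabs; repeat destruct Rcase_abs; lra. Qed.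

Lemma abs_tri a b c : Rabs (a - c) <= Rabs (a - b) + Rabs (b - c).
Proof. unfold Rabs; repeat destruct Rcase_abs; lra. Qed.

Lemma far_bound (gamma : R -> R * R) T c : 0 < T -> 0 < c ->
  continuity (fun s => fst (gamma s)) -> continuity (fun s => snd (gamma s)) ->
  (forall s, gamma (s + T) = gamma s) ->
  (forall s t, gamma s = gamma t -> exists k : Z, t - s = IZR k * T) ->
  exists m, 0 < m /\ forall s t, (forall k, c <= Rabs (t - IZR k * T - s)) ->
    m <= Rabs (fst (gamma s) - fst (gamma t)) + Rabs (snd (gamma s) - snd (gamma t)).
Proof.
  intros HT Hc Cx Cy Hp Hinj.
  set (x := fun s => fst (gamma s)). set (y := fun s => snd (gamma s)).
  assert (Px : forall s, x (s + T) = x s) by (intros; unfold x; rewrite Hp; auto).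
  assert (Py : forall s, y (s + T) = y s) by (intros; unfold y; rewrite Hp; auto).
  set (F := fun s tau => Rabs (x s - x (s + c + tau)) + Rabs (y s - y (s + c + tau))).
  destruct (rect_min F 0 T 0 (T - 2 * c) ltac:(lra)) as [m [Hm HmF]].
  - intros s tau Hs Htau. unfold F.
    destruct (Req_dec (x s) (x (s + c + tau))) as [E1|E1].
    2:{ assert (0 < Rabs (x s - x (s + c + tau))) by (apply Rabs_pos_lt; intro; apply E1; lra).
        assert (Hq := Rabs_pos (y s - y (s + c + tau))). lra. }
    destruct (Req_dec (y s) (y (s + c + tau))) as [E2|E2].
    2:{ assert (0 < Rabs (y s - y (s + c + tau))) by (apply Rabs_pos_lt; intro; apply E2; lra).
        assert (Hq := Rabs_pos (x s - x (s + c + tau))). lra. }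
    exfalso. unfold x, y in E1, E2.
    assert (Eg : gamma s = gamma (s + c + tau)).
    { rewrite (surjective_pairing (gamma s)), (surjective_pairing (gamma (s + c + tau))). congruence. }
    destruct (Hinj _ _ Eg) as [k Hk].
    assert (0 < IZR k * T < 1 * T) by lra.
    assert (0 < IZR k) by (apply Rmult_lt_reg_r with T; lra).
    assert (IZR k < 1) by (apply Rmult_lt_reg_r with T; lra).
    apply lt_IZR in H0. apply lt_IZR in H1. lia.
  - intros e He.
    destruct (UC_per x T HT Cx Px (e / 4)) as [d1 [Hd1 U1]]; [lra|].
    destruct (UC_per y T HT Cy Py (e / 4)) as [d2 [Hd2 U2]]; [lra|].
    exists (Rmin d1 d2 / 2). split. { assert (Hq := Rmin_pos _ _ Hd1 Hd2). lra. }
    intros s s' t t' Hs Ht.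
    assert (Q1 := Rmin_l d1 d2). assert (Q2 := Rmin_r d1 d2).
    assert (Hs1 : Rabs (s - s') < d1) by lra. assert (Hs2 : Rabs (s - s') < d2) by lra.
    assert (Hu : Rabs ((s + c + t) - (s' + c + t')) < Rmin d1 d2).
    { replace ((s + c + t) - (s' + c + t')) with ((s - s') + (t - t')) by ring.
      eapply Rle_lt_trans. apply Rabs_triang. lra. }
    unfold F. eapply Rle_lt_trans. apply abs4.
    assert (R1 := abs_tri (x s - x (s + c + t)) (x s' - x (s + c + t)) (x s' - x (s' + c + t'))).
    assert (R2 := abs_tri (y s - y (s + c + t)) (y s' - y (s + c + t)) (y s' - y (s' + c + t'))).
    replace (x s - x (s + c + t) - (x s' - x (s + c + t))) with (x s - x s') in R1 by ring.
    replace (x s' - x (s + c + t) - (x s' - x (s' + c + t'))) with (- (x (s + c + t) - x (s' + c + t'))) in R1 by ring.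
    replace (y s - y (s + c + t) - (y s' - y (s + c + t))) with (y s - y s') in R2 by ring.
    replace (y s' - y (s + c + t) - (y s' - y (s' + c + t'))) with (- (y (s + c + t) - y (s' + c + t'))) in R2 by ring.
    rewrite Rabs_Ropp in R1, R2.
    assert (V1 := U1 s s' Hs1). assert (V2 := U2 s s' Hs2).
    assert (V3 := U1 _ _ (Rlt_le_trans _ _ _ Hu Q1)).
    assert (V4 := U2 _ _ (Rlt_le_trans _ _ _ Hu Q2)).
    lra.
  - exists m. split; auto. intros s t Hfar.
    destruct (reduce T s HT) as [j Hj].
    set (s0 := s - IZR j * T).
    destruct (reduce T (t - s0) HT) as [k Hk].
    set (t0 := t - IZR k * T).
    assert (F1 : c <= t0 - s0).
    { specialize (Hfar (k - j)%Z). rewrite minus_IZR in Hfar.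
      replace (t - (IZR k - IZR j) * T - s) with (t0 - s0) in Hfar by (unfold t0, s0; ring).
      rewrite Rabs_right in Hfar; unfold t0 in *; lra. }
    assert (F2 : c <= T - (t0 - s0)).
    { specialize (Hfar (k - j + 1)%Z). rewrite plus_IZR, minus_IZR in Hfar.
      replace (t - (IZR k - IZR j + 1) * T - s) with (t0 - s0 - T) in Hfar by (unfold t0, s0; ring).
      rewrite Rabs_left in Hfar; unfold t0 in *; lra. }
    assert (Hs0 : gamma s = gamma s0).
    { unfold s0. rewrite <- (per_Z gamma T Hp j (s - IZR j * T)). f_equal; ring. }
    assert (Ht0 : gamma t = gamma t0).
    { unfold t0. rewrite <- (per_Z gamma T Hp k (t - IZR k * T)). f_equal; ring. }
    rewrite Hs0, Ht0.
    assert (HH := HmF s0 (t0 - s0 - c) ltac:(unfold s0; lra) ltac:(lra)).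
    unfold F, x, y in HH. replace (s0 + c + (t0 - s0 - c)) with t0 in HH by ring. exact HH.
Qed.

Lemma lub_ge E (m : R) : E m -> Rbar_le m (Lub_Rbar E).
Proof. intros H. destruct (Lub_Rbar_correct E) as [Hu _]. apply Hu; auto. Qed.

Lemma lub_gt E (r : R) : Rbar_lt r (Lub_Rbar E) -> exists m, E m /\ r < m.
Proof.
  intros H. apply NNPP. intros Hn.
  assert (U : is_ub_Rbar E r).
  { intros m Hm. simpl. apply Rnot_lt_le. intros Hc. apply Hn. exists m; auto. }
  destruct (Lub_Rbar_correct E) as [_ Hl]. specialize (Hl _ U).
  assert (Q := Rbar_lt_le_trans _ _ _ H Hl). simpl in Q. lra.
Qed.

Lemma glb_ge E (b : R) : (forall m, E m -> Rbar_le b m) -> Rbar_le b (Glb_Rbar E).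
Proof. intros H. destruct (Glb_Rbar_correct E) as [_ Hl]. apply Hl. intros m Hm; apply H; auto. Qed.

Lemma glb_le E (m : R) : E m -> Rbar_le (Glb_Rbar E) m.
Proof. intros H. destruct (Glb_Rbar_correct E) as [Hu _]. apply Hu; auto. Qed.

Lemma muK_at_gt gamma K (r : R) : Rbar_lt r (muK gamma K) -> forall th, Rbar_lt r (muK_at gamma K th).
Proof.
  intros H th. unfold muK, Rbar_inf_over in H.
  destruct (muK_at gamma K th) as [y| |] eqn:E.
  - assert (Q : Rbar_le (Glb_Rbar (fun m => exists i, True /\ Rbar_le (muK_at gamma K i) m)) y).
    { apply glb_le. exists th. split; auto. rewrite E. simpl. lra. }
    exact (Rbar_lt_le_trans _ _ _ H Q).
  - simpl; auto.
  - assert (Q : Rbar_le (Glb_Rbar (fun m => exists i, True /\ Rbar_le (muK_at gamma K i) m)) r).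
    { apply glb_le. exists th. split; auto. rewrite E. simpl. auto. }
    assert (Q' := Rbar_lt_le_trans _ _ _ H Q). simpl in Q'. lra.
Qed.

Lemma g_bound p q v : unit_vector v ->
  Rabs (dot p v - dot q v) <= Rabs (fst p - fst q) + Rabs (snd p - snd q).
Proof.
  intros Hu. unfold unit_vector in Hu. unfold dot.
  assert (A1 : Rabs (fst v) <= 1).
  { apply Rnot_lt_le. intros Hc. assert (1 < Rabs (fst v) * Rabs (fst v)) by nra.
    rewrite <- Rabs_mult in H. rewrite Rabs_right in H by nra. nra. }
  assert (A2 : Rabs (snd v) <= 1).
  { apply Rnot_lt_le. intros Hc. assert (1 < Rabs (snd v) * Rabs (snd v)) by nra.
    rewrite <- Rabs_mult in H. rewrite Rabs_right in H by nra. nra. }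
  replace (fst p * fst v + snd p * snd v - (fst q * fst v + snd q * snd v))
    with ((fst p - fst q) * fst v + (snd p - snd q) * snd v) by ring.
  eapply Rle_trans. apply Rabs_triang. rewrite !Rabs_mult.
  assert (Q1 := Rabs_pos (fst p - fst q)). assert (Q2 := Rabs_pos (snd p - snd q)).
  nra.
Qed.

Lemma conv_shift_close phi eps h s t e : cont phi -> (forall x, 0 <= phi x) -> RInt phi (-1) 1 = 1 ->
  cont h -> (forall w, -1 <= w <= 1 -> Rabs (h (s - eps * w) - h (t - eps * w)) <= e) ->
  Rabs (conv phi eps h s - conv phi eps h t) <= e.
Proof.
  intros Hp Hp0 H1 Hh Hw.
  assert (L1 : RInt (fun w => phi w * (1 * h (s - eps * w) + (-1) * h (t - eps * w))) (-1) 1 <=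
               RInt (fun w => phi w * e) (-1) 1).
  { apply RInt_phi_le; auto.
    - apply cont_lin; apply cont_shift; auto.
    - apply cont_const.
    - intros w Hw'. specialize (Hw w Hw'). apply Rabs_le_between in Hw. lra. }
  assert (L2 : RInt (fun w => phi w * (1 * h (t - eps * w) + (-1) * h (s - eps * w))) (-1) 1 <=
               RInt (fun w => phi w * e) (-1) 1).
  { apply RInt_phi_le; auto.
    - apply cont_lin; apply cont_shift; auto.
    - apply cont_const.
    - intros w Hw'. specialize (Hw w Hw'). apply Rabs_le_between in Hw. lra. }
  rewrite RInt_phi_lin, RInt_phi_const in L1, L2; auto; try apply cont_shift; auto.
  apply Rabs_le_between. unfold conv. lra.
Qed.

Lemma ge_fst (gamma : R -> R * R) phi eps s : cont phi -> cont (fun t => fst (gamma t)) -> 0 < eps ->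
  (forall x, 1 < Rabs x -> phi x = 0) ->
  fst (gamma_eps phi gamma eps s) = conv phi eps (fun t => fst (gamma t)) s.
Proof. intros. unfold gamma_eps. cbn [fst]. apply (gen_conv phi (fun t => fst (gamma t))); auto. Qed.

Lemma ge_snd (gamma : R -> R * R) phi eps s : cont phi -> cont (fun t => snd (gamma t)) -> 0 < eps ->
  (forall x, 1 < Rabs x -> phi x = 0) ->
  snd (gamma_eps phi gamma eps s) = conv phi eps (fun t => snd (gamma t)) s.
Proof. intros. unfold gamma_eps. cbn [snd]. apply (gen_conv phi (fun t => snd (gamma t))); auto. Qed.

Lemma ge_per (gamma : R -> R * R) phi eps T : (forall s, gamma (s + T) = gamma s) ->
  forall s, gamma_eps phi gamma eps (s + T) = gamma_eps phi gamma eps s.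
Proof.
  intros Hp s. unfold gamma_eps.
  replace (fun u => / eps * phi (u / eps) * fst (gamma (s + T - u)))
    with (fun u => / eps * phi (u / eps) * fst (gamma (s - u))).
  replace (fun u => / eps * phi (u / eps) * snd (gamma (s + T - u)))
    with (fun u => / eps * phi (u / eps) * snd (gamma (s - u))).
  reflexivity.
  - apply functional_extensionality; intro u. replace (s + T - u) with (s - u + T) by ring. rewrite Hp. auto.
  - apply functional_extensionality; intro u. replace (s + T - u) with (s - u + T) by ring. rewrite Hp. auto.
Qed.

Lemma conv_near phi eps h s0 t0 e d : cont phi -> (forall x, 0 <= phi x) -> RInt phi (-1) 1 = 1 ->
  cont h -> 0 < eps ->
  (forall s t, Rabs (s - t) < d -> Rabs (h s - h t) < e) ->
  Rabs (s0 - t0) + eps < d ->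
  Rabs (conv phi eps h s0 - h t0) <= e.
Proof.
  intros Hp Hp0 H1 Hh He Hd Hst. apply conv_close; auto.
  intros w Hw. left. apply Hd. assert (Q := ew_bound eps w He Hw).
  replace (s0 - eps * w - t0) with ((s0 - t0) + - (eps * w)) by ring.
  eapply Rle_lt_trans. apply Rabs_triang. rewrite Rabs_Ropp.
  assert (Rabs (eps * w) <= eps) by (apply Rabs_le; lra). lra.
Qed.

Lemma part_AC (gamma : R -> R * R) K phi T L :
  cont phi -> (forall x, 0 <= phi x) -> RInt phi (-1) 1 = 1 ->
  (forall x, 1 < Rabs x -> phi x = 0) -> 0 < T ->
  continuity (fun s => fst (gamma s)) -> continuity (fun s => snd (gamma s)) ->
  (forall s, gamma (s + T) = gamma s) ->
  (forall s t, gamma s = gamma t -> exists k : Z, t - s = IZR k * T) ->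
  0 < L -> (forall th, exists v a b, KLG_pair gamma K th v a b /\ a + L <= th /\ th + L <= b) ->
  exists delta, 0 < delta /\ forall eps, 0 < eps < delta ->
     jordan_curve (gamma_eps phi gamma eps) /\ locally_KLG (gamma_eps phi gamma eps) K.
Proof.
  intros Hp Hp0 H1 Hs HT Cx Cy Hper Hinj HL0 HL.
  set (x := fun s => fst (gamma s)). set (y := fun s => snd (gamma s)).
  assert (cx : cont x) by (apply cont_std; auto).
  assert (cy : cont y) by (apply cont_std; auto).
  assert (Px : forall s, x (s + T) = x s) by (intros; unfold x; rewrite Hper; auto).
  assert (Py : forall s, y (s + T) = y s) by (intros; unfold y; rewrite Hper; auto).
  destruct (far_bound gamma T (L / 2) HT ltac:(lra) Cx Cy Hper Hinj) as [m [Hm Hfar]].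
  destruct (UC_per x T HT Cx Px (m / 8)) as [d1 [Hd1 U1]]; [lra|].
  destruct (UC_per y T HT Cy Py (m / 8)) as [d2 [Hd2 U2]]; [lra|].
  exists (Rmin (L / 2) (Rmin d1 d2)). split.
  { apply Rmin_pos; [lra| apply Rmin_pos; auto]. }
  intros eps [He Hed].
  assert (Q1 := Rmin_l (L / 2) (Rmin d1 d2)). assert (Q2 := Rmin_r (L / 2) (Rmin d1 d2)).
  assert (Q3 := Rmin_l d1 d2). assert (Q4 := Rmin_r d1 d2).
  assert (Eg : forall v s, g_v (gamma_eps phi gamma eps) v s = conv phi eps (g_v gamma v) s).
  { intros v s. unfold g_v. apply ge_dot; auto. }
  assert (Ef : forall v s, f_v (gamma_eps phi gamma eps) v s = conv phi eps (f_v gamma v) s).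
  { intros v s. unfold f_v. apply ge_dot; auto. }
  assert (Cg : forall v, cont (g_v gamma v)) by (intros; apply cont_dot; auto).
  assert (Cf : forall v, cont (f_v gamma v)) by (intros; apply cont_dot; auto).
  assert (LK : locally_KLG (gamma_eps phi gamma eps) K).
  { intros th. destruct (HL th) as [v [a [b [Hk [Ha Hb]]]]].
    exists v, (a + eps), (b - eps). apply KLG_eps; auto. lra. }
  split; auto.
  assert (EX : forall s, fst (gamma_eps phi gamma eps s) = conv phi eps x s).
  { intros s. apply ge_fst; auto. }
  assert (EY : forall s, snd (gamma_eps phi gamma eps s) = conv phi eps y s).
  { intros s. apply ge_snd; auto. }
  assert (CC : forall h, cont h -> (forall e, 0 < e -> exists d, 0 < d /\ forall s t, Rabs (s - t) < d -> Rabs (h s - h t) < e) ->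
             continuity (conv phi eps h)).
  { intros h Ch Uh s. apply cont_pt_of. intros e He'.
    destruct (Uh (e / 2) ltac:(lra)) as [d [Hd Ud]]. exists d. split; auto.
    intros t Ht. eapply Rle_lt_trans. apply (conv_shift_close phi eps h t s (e / 2)); auto.
    - intros w Hw. left. apply Ud. replace (t - eps * w - (s - eps * w)) with (t - s) by ring. auto.
    - lra. }
  split; [|split].
  - replace (fun s => fst (gamma_eps phi gamma eps s)) with (conv phi eps x).
    2:{ apply functional_extensionality; intros; rewrite EX; auto. }
    apply CC; auto. intros e He'. apply (UC_per x T HT Cx Px e He').
  - replace (fun s => snd (gamma_eps phi gamma eps s)) with (conv phi eps y).
    2:{ apply functional_extensionality; intros; rewrite EY; auto. }
    apply CC; auto. intros e He'. apply (UC_per y T HT Cy Py e He').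
  - exists T. split; auto. split. { apply ge_per; auto. }
    intros s t Est.
    destruct (classic (exists k, Rabs (t - IZR k * T - s) < L / 2)) as [[k Hk]|Hn].
    + exists k. set (t' := t - IZR k * T).
      assert (Et' : gamma_eps phi gamma eps t' = gamma_eps phi gamma eps t).
      { unfold t'. rewrite <- (per_Z (gamma_eps phi gamma eps) T (ge_per gamma phi eps T Hper) k (t - IZR k * T)).
        f_equal; ring. }
      destruct (HL s) as [v [a [b [Hk' [Ha Hb]]]]].
      assert (KE : KLG_pair (gamma_eps phi gamma eps) K s v (a + eps) (b - eps)).
      { apply KLG_eps; auto. lra. }
      destruct KE as [_ [_ [Hmono _]]].
      assert (Gq : g_v (gamma_eps phi gamma eps) v t' = g_v (gamma_eps phi gamma eps) v s).
      { unfold g_v. rewrite Et', Est. auto. }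
      apply Rabs_lt_between in Hk. fold t' in Hk.
      destruct (Rtotal_order t' s) as [Hlt|[Heq|Hgt]].
      * exfalso. destruct Hmono as [Hm'|Hm']; assert (Z := Hm' t' s ltac:(lra) Hlt ltac:(lra)); lra.
      * unfold t' in Heq. lra.
      * exfalso. destruct Hmono as [Hm'|Hm']; assert (Z := Hm' s t' ltac:(lra) Hgt ltac:(lra)); lra.
    + exfalso.
      assert (Hf : forall k, L / 2 <= Rabs (t - IZR k * T - s)).
      { intros k. apply Rnot_lt_le. intros Hc. apply Hn. exists k; auto. }
      specialize (Hfar s t Hf).
      assert (Ex : conv phi eps x s = conv phi eps x t) by (rewrite <- !EX, Est; auto).
      assert (Ey : conv phi eps y s = conv phi eps y t) by (rewrite <- !EY, Est; auto).
      assert (Z0 : forall u, Rabs (u - u) + eps < d1) by (intros; unfold Rminus; rewrite Rplus_opp_r, Rabs_R0; lra).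
      assert (Z0' : forall u, Rabs (u - u) + eps < d2) by (intros; unfold Rminus; rewrite Rplus_opp_r, Rabs_R0; lra).
      assert (A1 := conv_near phi eps x s s (m / 8) d1 Hp Hp0 H1 cx He U1 (Z0 s)).
      assert (A2 := conv_near phi eps x t t (m / 8) d1 Hp Hp0 H1 cx He U1 (Z0 t)).
      assert (A3 := conv_near phi eps y s s (m / 8) d2 Hp Hp0 H1 cy He U2 (Z0' s)).
      assert (A4 := conv_near phi eps y t t (m / 8) d2 Hp Hp0 H1 cy He U2 (Z0' t)).
      rewrite Ex in A1. rewrite Ey in A3.
      assert (B1 := abs_tri (x s) (conv phi eps x t) (x t)).
      assert (B2 := abs_tri (y s) (conv phi eps y t) (y t)).
      rewrite Rabs_minus_sym in A1, A3.
      unfold x, y in *. lra.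
Qed.

Lemma key_B (gamma : R -> R * R) K phi T L (r eta : R) :
  cont phi -> (forall x, 0 <= phi x) -> RInt phi (-1) 1 = 1 ->
  (forall x, 1 < Rabs x -> phi x = 0) -> 0 < T ->
  continuity (fun s => fst (gamma s)) -> continuity (fun s => snd (gamma s)) ->
  (forall s, gamma (s + T) = gamma s) ->
  0 < L -> (forall th, exists v a b, KLG_pair gamma K th v a b /\ a + L <= th /\ th + L <= b) ->
  0 < eta -> Rbar_lt r (muK gamma K) ->
  Rbar_le (r - eta) (liminf_0plus (fun eps => muK (gamma_eps phi gamma eps) K)).
Proof.
  intros Hp Hp0 H1 Hs HT Cx Cy Hper HL0 HL Heta Hr.
  set (x := fun s => fst (gamma s)). set (y := fun s => snd (gamma s)).
  assert (cx : cont x) by (apply cont_std; auto).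
  assert (cy : cont y) by (apply cont_std; auto).
  assert (Px : forall s, x (s + T) = x s) by (intros; unfold x; rewrite Hper; auto).
  assert (Py : forall s, y (s + T) = y s) by (intros; unfold y; rewrite Hper; auto).
  destruct (UC_per x T HT Cx Px (eta / 8)) as [d1 [Hd1 U1]]; [lra|].
  destruct (UC_per y T HT Cy Py (eta / 8)) as [d2 [Hd2 U2]]; [lra|].
  set (delta := Rmin L (Rmin d1 d2) / 2).
  assert (Hdel : 0 < delta).
  { unfold delta. assert (0 < Rmin L (Rmin d1 d2)) by (apply Rmin_pos; [lra|apply Rmin_pos; auto]). lra. }
  assert (Ug : forall v s t, unit_vector v -> Rabs (s - t) < Rmin d1 d2 ->
             Rabs (g_v gamma v s - g_v gamma v t) < eta / 4).
  { intros v s t Hu Hst. eapply Rle_lt_trans. apply g_bound; auto.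
    assert (Q3 := Rmin_l d1 d2). assert (Q4 := Rmin_r d1 d2).
    assert (V1 := U1 s t ltac:(lra)). assert (V2 := U2 s t ltac:(lra)).
    unfold x, y in *. lra. }
  assert (Main : forall eps th, 0 < eps < delta ->
             Rbar_le (r - eta) (muK_at (gamma_eps phi gamma eps) K th)).
  { intros eps th [He Hed].
    assert (Q1 := Rmin_l L (Rmin d1 d2)). assert (Q2 := Rmin_r L (Rmin d1 d2)).
    assert (Eg : forall v s, g_v (gamma_eps phi gamma eps) v s = conv phi eps (g_v gamma v) s).
    { intros v s. unfold g_v. apply ge_dot; auto. }
    assert (Ef : forall v s, f_v (gamma_eps phi gamma eps) v s = conv phi eps (f_v gamma v) s).
    { intros v s. unfold f_v. apply ge_dot; auto. }
    assert (Cg : forall v, cont (g_v gamma v)) by (intros; apply cont_dot; auto).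
    assert (Cf : forall v, cont (f_v gamma v)) by (intros; apply cont_dot; auto).
    unfold muK_at.
    destruct (Rle_dec (r - eta) 0) as [Hneg|Hpos].
    - destruct (HL th) as [v [a [b [Hk [Ha Hb]]]]].
      assert (KE : KLG_pair (gamma_eps phi gamma eps) K th v (a + eps) (b - eps)).
      { apply KLG_eps; auto. unfold delta in Hed. lra. }
      eapply Rbar_le_trans. 2: apply lub_ge; exists v, (a + eps), (b - eps); split; [exact KE| reflexivity].
      simpl. unfold mu_pair. apply Rmin_glb; eapply Rle_trans; try apply Rabs_pos; lra.
    - assert (Hr' := muK_at_gt gamma K r Hr th).
      destruct (lub_gt _ _ Hr') as [mu [[v [a [b [Hk Hmu]]]] Hrm]].
      subst mu.
      assert (Hu := proj1 Hk). assert (Hab := proj1 (proj2 Hk)).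
      unfold mu_pair in Hrm.
      assert (Ma := Rmin_l (Rabs (g_v gamma v th - g_v gamma v a)) (Rabs (g_v gamma v th - g_v gamma v b))).
      assert (Mb := Rmin_r (Rabs (g_v gamma v th - g_v gamma v a)) (Rabs (g_v gamma v th - g_v gamma v b))).
      assert (Hin : a + eps < th < b - eps).
      { split.
        - apply Rnot_le_lt. intros Hc.
          assert (Z := Ug v th a Hu ltac:(apply Rabs_lt_between; unfold delta in Hed; lra)). lra.
        - apply Rnot_le_lt. intros Hc.
          assert (Z := Ug v th b Hu ltac:(apply Rabs_lt_between; unfold delta in Hed; lra)). lra. }
      assert (KE : KLG_pair (gamma_eps phi gamma eps) K th v (a + eps) (b - eps)).
      { apply KLG_eps; auto. }
      eapply Rbar_le_trans. 2: apply lub_ge; exists v, (a + eps), (b - eps); split; [exact KE| reflexivity].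
      simpl. unfold mu_pair. rewrite !Eg.
      assert (Ud : forall s t, Rabs (s - t) < Rmin d1 d2 -> Rabs (g_v gamma v s - g_v gamma v t) < eta / 4).
      { intros; apply Ug; auto. }
      assert (C1 := conv_near phi eps (g_v gamma v) th th (eta / 4) (Rmin d1 d2) Hp Hp0 H1 (Cg v) He Ud
                      ltac:(unfold Rminus; rewrite Rplus_opp_r, Rabs_R0; unfold delta in Hed; lra)).
      assert (C2 := conv_near phi eps (g_v gamma v) (a + eps) a (eta / 4) (Rmin d1 d2) Hp Hp0 H1 (Cg v) He Ud
                      ltac:(replace (a + eps - a) with eps by ring; rewrite Rabs_right by lra; unfold delta in Hed; lra)).
      assert (C3 := conv_near phi eps (g_v gamma v) (b - eps) b (eta / 4) (Rmin d1 d2) Hp Hp0 H1 (Cg v) He Ud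
                      ltac:(replace (b - eps - b) with (- eps) by ring; rewrite Rabs_Ropp, Rabs_right by lra; unfold delta in Hed; lra)).
      apply Rmin_glb.
      + assert (T1 := abs_tri (g_v gamma v th) (conv phi eps (g_v gamma v) th) (g_v gamma v a)).
        assert (T2 := abs_tri (conv phi eps (g_v gamma v) th) (conv phi eps (g_v gamma v) (a + eps)) (g_v gamma v a)).
        rewrite Rabs_minus_sym in C1.
        lra.
      + assert (T1 := abs_tri (g_v gamma v th) (conv phi eps (g_v gamma v) th) (g_v gamma v b)).
        assert (T2 := abs_tri (conv phi eps (g_v gamma v) th) (conv phi eps (g_v gamma v) (b - eps)) (g_v gamma v b)).
        rewrite Rabs_minus_sym in C1.
        lra. }
  assert (Inner : Rbar_le (r - eta) (Rbar_inf_over (fun eps => 0 < eps < delta) (fun eps => muK (gamma_eps phi gamma eps) K))).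
  { unfold Rbar_inf_over.
    apply (glb_ge (fun m => exists i, 0 < i < delta /\ Rbar_le (muK (gamma_eps phi gamma i) K) m) (r - eta)).
    intros m [eps [Heps Hle]].
    eapply Rbar_le_trans; [|exact Hle].
    unfold muK, Rbar_inf_over.
    apply (glb_ge (fun m => exists i, True /\ Rbar_le (muK_at (gamma_eps phi gamma eps) K i) m) (r - eta)).
    intros m' [th [_ Hle']].
    eapply Rbar_le_trans; [|exact Hle']. apply Main; auto. }
  unfold liminf_0plus, Rbar_sup_over.
  apply lub_ge. exists delta. split; auto.
Qed.

Theorem lemma4p3 (gamma : R -> R * R) (K : R) (phi : R -> R) :
  jordan_curve gamma ->
  locally_KLG gamma K ->
  smooth phi ->
  (forall x, 0 <= phi x) ->
  (forall x, 1 < Rabs x -> phi x = 0) ->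
  is_RInt_gen phi (Rbar_locally m_infty) (Rbar_locally p_infty) 1 ->
  (exists delta, 0 < delta /\
     forall eps, 0 < eps < delta ->
       jordan_curve (gamma_eps phi gamma eps) /\
       locally_KLG (gamma_eps phi gamma eps) K) /\
  Rbar_le (muK gamma K)
          (liminf_0plus (fun eps => muK (gamma_eps phi gamma eps) K)).
Proof.
  intros [Cx [Cy [T [HT [Hper Hinj]]]]] HK Hsm Hp0 Hs Hint.
  assert (Hp : cont phi).
  { intros x. apply (ex_derive_continuous (K:=R_AbsRing) (V:=R_NormedModule) phi x). exact (Hsm 0%nat x). }
  assert (H1 := phi_int1 phi Hp Hs Hint).
  destruct (margin gamma K T HT Hper HK) as [L [HL0 HL]].
  split.
  - apply (part_AC gamma K phi T L); auto.
  - set (Lf := liminf_0plus (fun eps => muK (gamma_eps phi gamma eps) K)).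
    assert (Key : forall r eta : R, 0 < eta -> Rbar_lt r (muK gamma K) -> Rbar_le (r - eta) Lf).
    { intros r eta He Hr. apply (key_B gamma K phi T L); auto. }
    destruct (muK gamma K) as [M| |] eqn:EM.
    + destruct Lf as [l| |] eqn:EL.
      * simpl. apply Rnot_lt_le. intros Hc.
        assert (Z := Key (M - (M - l) / 4) ((M - l) / 4) ltac:(lra) ltac:(simpl; lra)).
        simpl in Z. lra.
      * simpl; auto.
      * exfalso. assert (Z := Key (M - 1) 1 ltac:(lra) ltac:(simpl; lra)). simpl in Z. auto.
    + destruct Lf as [l| |] eqn:EL.
      * exfalso. assert (Z := Key (l + 2) 1 ltac:(lra) ltac:(simpl; auto)). simpl in Z. lra.
      * simpl; auto.
      * exfalso. assert (Z := Key 0 1 ltac:(lra) ltac:(simpl; auto)). simpl in Z. auto.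
    + simpl; auto.
Qed.
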